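(* Let $E$ be a finite-dimensional complex Hilbert space, $e\in E$ a unit vector, $0<\tau<1$, and define $$\Phi(S):=S^{1/2}\bigl(I_E-\tau|e\rangle\langle e|\bigr)S^{1/2},\qquad S\in B(E)_+.$$ For $S\in B(E)_+$ the following are equivalent: (1) $\Phi(S)=S$; (2) $S^{1/2}e=0$; (3) $Se=0$; (4) $\mathrm{ran}(S)\subseteq e^\perp$. In particular, every positive operator supported on $e^\perp$ is a fixed point of $\Phi$. Consequently, for any $T_0\in B(E)_+$, with $T_{n+1}:=\Phi(T_n)$ and $T_\infty:=\lim_nT_n$, the limit $T_\infty$ is a fixed point of $\Phi$, and therefore $T_\infty e=0$ and $\mathrm{ran}(T_\infty)\subseteq e^\perp$.
   Context: For vectors $x,y$, $|x\rangle\langle y|$ denotes the operator $z\mapsto\langle y,z\rangle x$. $B(E)_+$ denotes positive operators; $S^{1/2}$ is the positive square root. The sequence $T_n$ is decreasing in the operator order, so its norm limit exists. *)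

(* Defs.v *)
From HB Require Import structures.
From mathcomp Require Import all_boot all_order all_algebra.
From mathcomp Require Import sesquilinear.
From mathcomp Require Import complex.
From mathcomp Require Import boolp classical_sets reals filter topology normedtype sequences.

Set Implicit Arguments.
Unset Strict Implicit.
Unset Printing Implicit Defensive.

Import Order.TTheory GRing.Theory Num.Theory.
Import numFieldNormedType.Exports.
Local Open Scope ring_scope.
Local Open Scope complex_scope.
Local Open Scope classical_set_scope.

(* E = C^n (column vectors 'cV[R[i]]_n), B(E) = 'M[R[i]]_n.
   Inner product <y, z> = y^* z (conjugate-linear in the first slot). *)

Section Defs.
Variables (R : realType) (n : nat).
Local Notation C := R[i].

Definition adj (p q : nat) (A : 'M[C]_(p, q)) : 'M[C]_(q, p) := (map_mx Num.conj A)^T.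

Definition inner (y z : 'cV[C]_n) : C := (adj y *m z) 0 0.

Definition psd (A : 'M[C]_n) : Prop :=
  adj A = A /\ forall x : 'cV[C]_n, 0 <= inner x (A *m x).

(* S^{1/2}: the (unique) positive square root; defined by choice,
   default 0 when S is not positive (never used there). *)
Definition psd_sqrt (S : 'M[C]_n) : 'M[C]_n :=
  match pselect (exists B : 'M[C]_n, psd B /\ B *m B = S) with
  | left h => proj1_sig (cid h)
  | right _ => 0
  end.

Definition ketbra (x y : 'cV[C]_n) : 'M[C]_n := x *m adj y.

Definition Phi (tau : R) (e : 'cV[C]_n) (S : 'M[C]_n) : 'M[C]_n :=
  psd_sqrt S *m (1%:M - (tau%:C) *: ketbra e e) *m psd_sqrt S.

Definition ran_in_perp (S : 'M[C]_n) (e : 'cV[C]_n) : Prop :=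
  forall x : 'cV[C]_n, inner e (S *m x) = 0.

(* convergence of a sequence of operators (finite dimension: norm
   convergence is equivalent to entrywise convergence) *)
Definition mx_cvg (T : nat -> 'M[C]_n) (L : 'M[C]_n) : Prop :=
  forall i j : 'I_n,
    (fun k => complex.Re (T k i j)) @ \oo --> complex.Re (L i j) /\
    (fun k => complex.Im (T k i j)) @ \oo --> complex.Im (L i j).

End Defs.

(* Main.v *)
Require Import Defs.
From HB Require Import structures.
From mathcomp Require Import all_boot all_order all_algebra.
From mathcomp Require Import complex sesquilinear spectral.
From mathcomp Require Import ring lra.
From mathcomp Require Import boolp classical_sets reals filter topology normedtype sequences.
Import Order.TTheory GRing.Theory Num.Theory.
Import numFieldNormedType.Exports.
Set Implicit Arguments.
Unset Strict Implicit.
Unset Printing Implicit Defensive.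
Local Open Scope complex_scope.
Local Open Scope ring_scope.

Section Alg.
Variable R : realType.
Local Notation C := R[i].

Lemma adjM p q r (A : 'M[C]_(p, q)) (B : 'M[C]_(q, r)) :
  adj (A *m B) = adj B *m adj A.
Proof. by rewrite /adj map_mxM trmx_mul. Qed.

Lemma adjK p q (A : 'M[C]_(p, q)) : adj (adj A) = A.
Proof.
apply/matrixP => i j; rewrite /adj !mxE; exact: conjCK.
Qed.

Lemma adjD p q (A B : 'M[C]_(p, q)) : adj (A + B) = adj A + adj B.
Proof. by apply/matrixP => i j; rewrite /adj !mxE rmorphD. Qed.

Lemma adjN p q (A : 'M[C]_(p, q)) : adj (- A) = - adj A.
Proof. by apply/matrixP => i j; rewrite /adj !mxE rmorphN. Qed.

Lemma adjB p q (A B : 'M[C]_(p, q)) : adj (A - B) = adj A - adj B.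
Proof. by rewrite adjD adjN. Qed.

Lemma adjZ p q (c : C) (A : 'M[C]_(p, q)) : adj (c *: A) = c^* *: adj A.
Proof. by apply/matrixP => i j; rewrite /adj !mxE rmorphM. Qed.

Lemma adj1 p : adj (1%:M : 'M[C]_p) = 1%:M.
Proof.
apply/matrixP => i j; rewrite /adj !mxE eq_sym.
by rewrite rmorph_nat.
Qed.

Lemma adj0 p q : adj (0 : 'M[C]_(p, q)) = 0.
Proof. by apply/matrixP => i j; rewrite /adj !mxE conjC0. Qed.

Lemma adj_diag p (d : 'rV[C]_p) : adj (diag_mx d) = diag_mx (map_mx Num.conj d).
Proof. by rewrite /adj map_diag_mx tr_diag_mx. Qed.

Variable n : nat.

Lemma innerE (x y : 'cV[C]_n) : inner x y = \sum_i (x i 0)^* * y i 0.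
Proof. by rewrite /inner mxE; apply: eq_bigr => i _; rewrite /adj !mxE. Qed.

Lemma inner_ge0 (x : 'cV[C]_n) : 0 <= inner x x.
Proof.
rewrite innerE; apply: sumr_ge0 => i _; rewrite mulrC; exact: mul_conjC_ge0.
Qed.

Lemma inner_eq0 (x : 'cV[C]_n) : inner x x = 0 -> x = 0.
Proof.
rewrite innerE => h; apply/matrixP => i j; rewrite ord1 mxE.
have F0 : forall k : 'I_n, true -> 0 <= (x k 0)^* * x k 0.
  by move=> k _; rewrite mulrC; exact: mul_conjC_ge0.
have := @psumr_eq0P _ _ _ _ F0 h i isT.
by rewrite mulrC => /eqP; rewrite mul_conjC_eq0 => /eqP.
Qed.


Lemma adj_delta (i : 'I_n) : adj (delta_mx i 0 : 'cV[C]_n) = delta_mx 0 i.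
Proof.
apply/matrixP => a b; rewrite /adj !mxE.
by case: (b == i); case: (a == 0); rewrite /= ?conjC1 ?conjC0.
Qed.

Lemma inner_mul (x y : 'cV[C]_n) (M : 'M[C]_n) :
  inner x (M *m y) = (adj x *m M *m y) 0 0.
Proof. by rewrite /inner mulmxA. Qed.

Lemma entry_delta (M : 'M[C]_n) (i j : 'I_n) :
  ((delta_mx 0 i : 'rV[C]_n) *m M *m (delta_mx j 0 : 'cV[C]_n)) 0 0 = M i j.
Proof. by rewrite -rowE -colE !mxE. Qed.

Lemma quad_diag_ge0 (s : 'rV[C]_n) (y : 'cV[C]_n) :
  (forall i, 0 <= s 0 i) -> 0 <= (adj y *m diag_mx s *m y) 0 0.
Proof.
move=> hs; rewrite mul_mx_diag mxE; apply: sumr_ge0 => i _.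
rewrite !mxE -mulrA mulrCA; apply: mulr_ge0 => //.
rewrite mulrC; exact: mul_conjC_ge0.
Qed.

Lemma psd_sqrt_exists (S : 'M[C]_n) : psd S -> exists B, psd B /\ B *m B = S.
Proof.
move=> [hadj hpos].
have adjE p q (A : 'M[C]_(p, q)) : adj A = (A ^t* )%sesqui by rewrite /adj map_trmx.
have hermS : S \is hermsymmx.
  by apply/is_hermitianmxP; rewrite expr0 scale1r -adjE hadj.
set P := spectralmx S; set d := spectral_diag S.
have hS : S = invmx P *m diag_mx d *m P.
  exact/orthomx_spectralP/hermitian_normalmx.
have Pu : P \is unitarymx by exact: spectral_unitarymx.
have iP : invmx P = adj P by rewrite adjE invmx_unitary.
have PPa : P *m adj P = 1%:M by rewrite -iP mulmxV // spectral_unit.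
have PaP : adj P *m P = 1%:M by rewrite -iP mulVmx // spectral_unit.
rewrite iP in hS.
have hD : diag_mx d = P *m S *m adj P.
  by rewrite hS !mulmxA PPa mul1mx -mulmxA PPa mulmx1.
have hd : forall i, 0 <= d 0 i.
  move=> i; have := hpos (adj P *m delta_mx i 0).
  rewrite inner_mul adjM adjK adj_delta.
  have -> : (delta_mx 0 i : 'rV[C]_n) *m P *m S *m (adj P *m (delta_mx i 0 : 'cV[C]_n)) =
    (delta_mx 0 i : 'rV[C]_n) *m (P *m S *m adj P) *m (delta_mx i 0 : 'cV[C]_n)  by rewrite !mulmxA.
  by rewrite -hD entry_delta mxE eqxx mulr1n.
set s := \row_i sqrtC (d 0 i).
have hs : forall i, 0 <= s 0 i by move=> i; rewrite mxE sqrtC_ge0.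
exists (adj P *m diag_mx s *m P); split; [split|].
- rewrite !adjM adjK adj_diag !mulmxA; congr (_ *m _ *m _).
  apply/matrixP => i j; rewrite !mxE. by rewrite geC0_conj // sqrtC_ge0.
- move=> x; rewrite inner_mul -!mulmxA !mulmxA -adjM -mulmxA.
  exact: quad_diag_ge0.
- rewrite -!mulmxA (mulmxA P) PPa mul1mx !mulmxA -(mulmxA _ (diag_mx s) (diag_mx s)).
  have -> : diag_mx s *m diag_mx s = diag_mx d.
    apply/matrixP => i j; rewrite mul_diag_mx !mxE.
    case: (i == j); rewrite /= ?mulr1n ?mulr0n ?mulr0 //.
    by rewrite -expr2 sqrtCK.
  by rewrite hS.
Qed.


Lemma psd_sqrtP (S : 'M[C]_n) : psd S ->
  psd (psd_sqrt S) /\ psd_sqrt S *m psd_sqrt S = S.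
Proof.
move=> hS; rewrite /psd_sqrt; case: pselect => [h|[]]; last exact: psd_sqrt_exists.
by case: (cid h).
Qed.

Lemma adj_inner (v : 'cV[C]_n) : adj v *m v = (inner v v)%:M.
Proof. exact: mx11_scalar. Qed.

Lemma outer_eq0 (v : 'cV[C]_n) : v *m adj v = 0 -> v = 0.
Proof.
move=> h; apply: inner_eq0.
have : adj v *m (v *m adj v) *m v = 0 by rewrite h mulmx0 mul0mx.
rewrite !mulmxA -(mulmxA _ _ v) adj_inner -scalar_mxM => /matrixP/(_ 0 0).
by rewrite !mxE /= mulr1n => /eqP; rewrite mulf_eq0 orbb => /eqP.
Qed.

Lemma psd_inner_eq0 (S : 'M[C]_n) (x : 'cV[C]_n) :
  psd S -> inner x (S *m x) = 0 -> psd_sqrt S *m x = 0.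
Proof.
move=> hS; have [[hB _] hBB] := psd_sqrtP hS.
move=> h; apply: inner_eq0; move: h; rewrite -{1}hBB inner_mul -{1}hB !mulmxA -adjM -mulmxA.
by [].
Qed.


Lemma inner_adj (M : 'M[C]_n) x y : inner (M *m x) y = inner x (adj M *m y).
Proof. by rewrite /inner adjM mulmxA. Qed.

Lemma inner_conj (x y : 'cV[C]_n) : inner y x = (inner x y)^*.
Proof.
rewrite !innerE rmorph_sum; apply: eq_bigr => i _.
by rewrite rmorphM /= conjCK mulrC.
Qed.

Lemma innerDl (x y z : 'cV[C]_n) : inner (x + y) z = inner x z + inner y z.
Proof. by rewrite /inner adjD mulmxDl mxE. Qed.
Lemma innerDr (x y z : 'cV[C]_n) : inner x (y + z) = inner x y + inner x z.
Proof. by rewrite /inner mulmxDr mxE. Qed.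
Lemma innerZl c (x y : 'cV[C]_n) : inner (c *: x) y = c^* * inner x y.
Proof. by rewrite /inner adjZ -scalemxAl mxE. Qed.
Lemma innerZr c (x y : 'cV[C]_n) : inner x (c *: y) = c * inner x y.
Proof. by rewrite /inner -scalemxAr mxE. Qed.

Lemma herm_sym (M : 'M[C]_n) x y : adj M = M ->
  inner y (M *m x) = (inner x (M *m y))^*.
Proof. by move=> h; rewrite inner_conj inner_adj h. Qed.

Lemma quad_expand (M : 'M[C]_n) x y c : adj M = M ->
  inner (x + c *: y) (M *m (x + c *: y)) =
  inner x (M *m x) + c^* * c * inner y (M *m y) +
  (c * inner x (M *m y) + (c * inner x (M *m y))^*).
Proof.
move=> h; rewrite mulmxDr -scalemxAr innerDl !innerDr !innerZl !innerZr.
rewrite (herm_sym x y h) rmorphM /=; ring.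
Qed.

Lemma inner_delta (M : 'M[C]_n) i j :
  inner (delta_mx i 0) (M *m delta_mx j 0) = M i j.
Proof. by rewrite inner_mul adj_delta entry_delta. Qed.

Lemma ReC (z : C) : complex.Re z^* = complex.Re z. Proof. by case: z. Qed.
Lemma ReD (z w : C) : complex.Re (z + w) = complex.Re z + complex.Re w. Proof. by case: z; case: w. Qed.
Lemma ReM_real (t : R) (w : C) : complex.Re ((t%:C)%C * w) = t * complex.Re w.
Proof. by case: w => a b /=; rewrite mul0r subr0. Qed.

Definition quad (M : 'M[C]_n) x := inner x (M *m x).

Lemma Re_entry (M : 'M[C]_n) i j : adj M = M ->
  complex.Re (M i j) = (complex.Re (quad M ((delta_mx i 0 : 'cV[C]_n) + (delta_mx j 0 : 'cV[C]_n)))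
     - complex.Re (quad M ((delta_mx i 0 : 'cV[C]_n))) - complex.Re (quad M ((delta_mx j 0 : 'cV[C]_n)))) / 2.
Proof.
move=> h; rewrite /quad.
have -> : (delta_mx i 0 + delta_mx j 0 : 'cV[C]_n) = delta_mx i 0 + 1 *: delta_mx j 0 by rewrite scale1r.
rewrite quad_expand // inner_delta.
rewrite !ReD ReC conjC1 !mul1r !inner_delta; lra.
Qed.

Lemma Im_entry (M : 'M[C]_n) i j : adj M = M ->
  complex.Im (M i j) = (complex.Re (quad M ((delta_mx i 0 : 'cV[C]_n))) + complex.Re (quad M ((delta_mx j 0 : 'cV[C]_n)))
     - complex.Re (quad M ((delta_mx i 0 : 'cV[C]_n) + 'i%C *: (delta_mx j 0 : 'cV[C]_n)))) / 2.
Proof.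
move=> h; rewrite /quad quad_expand // inner_delta.
have -> : ('i%C)^* * 'i%C = 1 :> C by apply/eqP; rewrite eq_complex /=; simpc.
rewrite mul1r !ReD ReC !inner_delta (mulrC _ (M i j)) ReiNIm; lra.
Qed.

Variables (e : 'cV[C]_n) (tau : R).

Lemma Phi_eq (S : 'M[C]_n) : psd S ->
  Phi tau e S = S - (tau%:C)%C *: ((psd_sqrt S *m e) *m adj (psd_sqrt S *m e)).
Proof.
move=> hS; have [[hB _] hBB] := psd_sqrtP hS.
rewrite /Phi /ketbra mulmxBr mulmx1 mulmxBl hBB; congr (_ - _).
by rewrite -scalemxAr -scalemxAl adjM hB !mulmxA.
Qed.

Lemma part1 (S : 'M[C]_n) : 0 < tau -> psd S ->
  [<-> Phi tau e S = S; psd_sqrt S *m e = 0; S *m e = 0; ran_in_perp S e].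
Proof.
move=> tau0 hS; have [[hB _] hBB] := psd_sqrtP hS.
have [hadj _] := hS.
tfae.
- rewrite Phi_eq // => h.
  have : (tau%:C)%C *: ((psd_sqrt S *m e) *m adj (psd_sqrt S *m e)) = 0.
    by apply: oppr_inj; apply: (@addrI _ S); rewrite oppr0 addr0.
  move/eqP; rewrite scalemx_eq0 fmorph_eq0 (gt_eqF tau0) /= => /eqP.
  exact: outer_eq0.
- by move=> h; rewrite -hBB -mulmxA h mulmx0.
- by move=> h x; rewrite inner_mul -{1}hadj -adjM h adj0 mul0mx mxE.
- move=> h; rewrite Phi_eq //.
  have -> : psd_sqrt S *m e = 0 by apply: psd_inner_eq0 => //; exact: h.
  by rewrite mul0mx scaler0 subr0.
Qed.


Lemma psd_Phi (S : 'M[C]_n) : inner e e = 1 -> 0 < tau -> tau < 1 -> psd S ->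
  psd (Phi tau e S).
Proof.
move=> he tau0 tau1 hS; have [[hB _] hBB] := psd_sqrtP hS.
set B := psd_sqrt S.
set P := e *m adj e.
set r := sqrtC (1 - (tau%:C)%C).
set c := 1 - r.
have h1t : 0 <= 1 - (tau%:C)%C.
  by rewrite -(rmorph1 (real_complex R)) -rmorphB ler0c subr_ge0 ltW.
have hr2 : r ^+ 2 = 1 - (tau%:C)%C by rewrite sqrtCK.
have hr0 : 0 <= r by rewrite sqrtC_ge0.
have hc : c^* = c by rewrite rmorphB rmorph1; congr (_ - _); exact: geC0_conj.
have hPP : P *m P = P.
  by rewrite /P mulmxA -(mulmxA e) adj_inner he mulmx1.
have hPa : adj P = P by rewrite /P adjM adjK.
set K := 1%:M - c *: P.
have hK : adj K = K by rewrite /K adjB adj1 adjZ hc hPa.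
have hKK : K *m K = 1%:M - (tau%:C)%C *: ketbra e e.
  rewrite /K !mulmxBl !mulmxBr ?mul1mx ?mulmx1 -?scalemxAl -?scalemxAr scalerA hPP.
  have -> : (tau%:C)%C = c + c - c * c.
    have e1 : c + c - c * c = 1 - r ^+ 2 by rewrite /c; ring.
    by rewrite e1 hr2; ring.
  apply/matrixP => i j; rewrite /ketbra -/P !mxE; ring.
have hPhi : Phi tau e S = B *m K *m K *m B by rewrite /Phi -hKK !mulmxA.
split.
- by rewrite hPhi !adjM hK hB !mulmxA.
- move=> x; rewrite hPhi inner_mul.
  have -> : adj x *m (B *m K *m K *m B) *m x = adj (K *m B *m x) *m (K *m B *m x).
    by rewrite !adjM hK hB !mulmxA.
  exact: inner_ge0.
Qed.


Lemma innerBr (x y z : 'cV[C]_n) : inner x (y - z) = inner x y - inner x z.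
Proof. by rewrite /inner mulmxBr !mxE. Qed.

Lemma ReN (z : C) : complex.Re (- z) = - complex.Re z. Proof. by case: z. Qed.

Lemma quad_Phi (S : 'M[C]_n) x : psd S ->
  complex.Re (quad (Phi tau e S) x) = complex.Re (quad S x)
    - tau * complex.Re (inner x (psd_sqrt S *m e) * (inner x (psd_sqrt S *m e))^*).
Proof.
move=> hS; rewrite /quad Phi_eq // mulmxBl innerBr -scalemxAl innerZr.
rewrite ReD ReN ReM_real; congr (_ - _ * complex.Re _).
set v := psd_sqrt S *m e.
by rewrite -inner_conj /inner -mulmxA (mulmxA (adj x)) [LHS]mxE big_ord1.
Qed.


Lemma ReSum (F : 'I_n -> C) : complex.Re (\sum_i F i) = \sum_i complex.Re (F i).
Proof. exact: (big_morph _ ReD (erefl _)). Qed.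

Lemma Re_ge0 (z : C) : 0 <= z -> 0 <= complex.Re z.
Proof. by rewrite lecE => /andP[]. Qed.

Lemma quad_e_id (S : 'M[C]_n) : 0 < tau -> psd S ->
  complex.Re (quad S e) =
  tau^-1 * \sum_i (complex.Re (quad S (delta_mx i 0))
                  - complex.Re (quad (Phi tau e S) (delta_mx i 0))).
Proof.
move=> tau0 hS; have [[hB _] hBB] := psd_sqrtP hS.
set v := psd_sqrt S *m e.
have -> : quad S e = inner v v.
  by rewrite /quad -hBB inner_mul -{1}hB !mulmxA -adjM -mulmxA.
under eq_bigr => i _ do rewrite quad_Phi // opprB addrC subrK.
have hw : forall i, inner (delta_mx i 0) v = v i 0.
  by move=> i; rewrite /inner adj_delta -rowE mxE.
under eq_bigr => i _ do rewrite hw.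
rewrite -mulr_sumr mulrA mulVf ?mul1r ?gt_eqF // innerE ReSum.
by apply: eq_bigr => i _; rewrite mulrC.
Qed.

End Alg.

Section Seq.
Variable R : realType.
Local Open Scope classical_set_scope.

Lemma cvg_sum_fin (I : finType) (F : I -> nat -> R) (l : I -> R) :
  (forall i, F i @ \oo --> l i) ->
  (fun k => \sum_(i : I) F i k) @ \oo --> \sum_(i : I) l i.
Proof.
move=> h.
have gen : forall r : seq I,
    (fun k => \sum_(i <- r) F i k) @ \oo --> \sum_(i <- r) l i.
  elim => [|a r IH].
    rewrite big_nil.
    have -> : (fun k => \sum_(i <- [::]) F i k) = (fun=> 0).
      by apply: funext => k; rewrite big_nil.
    exact: cvg_cst.
  rewrite big_cons.
  have -> : (fun k => \sum_(i <- a :: r) F i k) =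
            (fun k => F a k + \sum_(i <- r) F i k).
    by apply: funext => k; rewrite big_cons.
  exact: cvgD.
exact: gen.
Qed.

Lemma cvg_uniq (f : nat -> R) (a b : R) : f @ \oo --> a -> f @ \oo --> b -> a = b.
Proof.
move=> ha hb; rewrite -(cvg_lim (@Rhausdorff R) ha).
exact: (cvg_lim (@Rhausdorff R) hb).
Qed.

End Seq.

Section Iter.
Variables (R : realType) (n : nat) (e : 'cV[R[i]]_n) (tau : R) (T0 : 'M[R[i]]_n).
Hypotheses (he : inner e e = 1) (tau0 : 0 < tau) (tau1 : tau < 1) (hT0 : psd T0).
Local Open Scope classical_set_scope.
Local Notation C := R[i].

Let T k := iter k (Phi tau e) T0.

Lemma T_psd k : psd (T k).
Proof. by elim: k => [|k IH] //=; exact: psd_Phi. Qed.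

Lemma T_herm k : adj (T k) = T k.
Proof. by case: (T_psd k). Qed.

Let q (x : 'cV[C]_n) k := complex.Re (quad (T k) x).

Lemma q_ge0 x k : 0 <= q x k.
Proof. by apply: Re_ge0; case: (T_psd k) => _; apply. Qed.

Lemma q_dec x k : q x k.+1 <= q x k.
Proof.
rewrite /q /T iterS quad_Phi; last exact: T_psd.
rewrite lerBlDr lerDl; apply: mulr_ge0; first exact: ltW.
apply: Re_ge0; exact: mul_conjC_ge0.
Qed.

Lemma q_cvg x : q x @ \oo --> limn (q x).
Proof.
have [l hl] : exists l : R, q x @ \oo --> l.
  exists (inf (range (q x))); apply: nonincreasing_cvgn.
    by apply/nonincreasing_seqP => k; exact: q_dec.
  by exists 0 => _ [k _ <-]; exact: q_ge0.
by rewrite (cvg_lim (@Rhausdorff R) hl).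
Qed.

Lemma Re_T_cvg i j : (fun k => complex.Re (T k i j)) @ \oo --> limn (fun k => complex.Re (T k i j)).
Proof.
apply/cvg_ex; eexists.
have -> : (fun k => complex.Re (T k i j)) =
  (fun k => (q (delta_mx i 0 + delta_mx j 0) k - q (delta_mx i 0) k - q (delta_mx j 0) k) / 2).
  by apply: funext => k; rewrite Re_entry // T_herm.
apply: cvgMl; apply: cvgB; [apply: cvgB|]; exact: q_cvg.
Qed.

Lemma Im_T_cvg i j : (fun k => complex.Im (T k i j)) @ \oo --> limn (fun k => complex.Im (T k i j)).
Proof.
apply/cvg_ex; eexists.
have -> : (fun k => complex.Im (T k i j)) =
  (fun k => (q (delta_mx i 0) k + q (delta_mx j 0) k - q (delta_mx i 0 + 'i%C *: delta_mx j 0) k) / 2).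
  by apply: funext => k; rewrite Im_entry // T_herm.
apply: cvgMl; apply: cvgB; [apply: cvgD|]; exact: q_cvg.
Qed.

Lemma limit_exists : exists Tinf, mx_cvg (fun k => iter k (Phi tau e) T0) Tinf.
Proof.
exists (\matrix_(i, j) ((limn (fun k => complex.Re (T k i j))) +i* (limn (fun k => complex.Im (T k i j))))%C).
move=> i j; rewrite !mxE /=; split; [exact: Re_T_cvg | exact: Im_T_cvg].
Qed.

Lemma ReM (z w : C) : complex.Re (z * w) = complex.Re z * complex.Re w - complex.Im z * complex.Im w.
Proof. by case: z => a b; case: w => c d. Qed.

Lemma ImC (z : C) : complex.Im z^* = - complex.Im z.
Proof. by case: z. Qed.

Lemma conj_eq (z w : C) : complex.Re z = complex.Re w -> complex.Im z = - complex.Im w -> z^* = w.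
Proof. case: z => a b; case: w => c d /= -> ->; apply/eqP; by rewrite eq_complex /= opprK !eqxx. Qed.

Lemma C_eq0 (z : C) : complex.Re z = 0 -> complex.Im z = 0 -> z = 0.
Proof. by case: z => a b /= -> ->. Qed.

Lemma Re_inner_expand (M : 'M[C]_n) (x y : 'cV[C]_n) :
  complex.Re (inner x (M *m y)) = \sum_i \sum_j
    (complex.Re (M i j) * complex.Re ((x i 0)^* * y j 0)
     - complex.Im (M i j) * complex.Im ((x i 0)^* * y j 0)).
Proof.
rewrite innerE ReSum; apply: eq_bigr => i _; rewrite mxE mulr_sumr ReSum.
by apply: eq_bigr => j _; rewrite mulrCA ReM.
Qed.

Section Lim.
Variable Tinf : 'M[C]_n.
Hypothesis hinf : mx_cvg (fun k => iter k (Phi tau e) T0) Tinf.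

Lemma form_cvg x y : (fun k => complex.Re (inner x (T k *m y))) @ \oo -->
   complex.Re (inner x (Tinf *m y)).
Proof.
rewrite Re_inner_expand.
have -> : (fun k => complex.Re (inner x (T k *m y))) = (fun k => \sum_i \sum_j
    (complex.Re (T k i j) * complex.Re ((x i 0)^* * y j 0)
     - complex.Im (T k i j) * complex.Im ((x i 0)^* * y j 0))).
  by apply: funext => k; rewrite Re_inner_expand.
apply: cvg_sum_fin => i; apply: cvg_sum_fin => j.
set c1 := complex.Re _; set c2 := complex.Im ((x i 0)^* * y j 0).
have h1 : (fun k => complex.Re (T k i j) * c1) @ \oo --> complex.Re (Tinf i j) * c1.
  exact: (cvgMr_tmp (hinf i j).1).
have h2 : (fun k => complex.Im (T k i j) * c2) @ \oo --> complex.Im (Tinf i j) * c2.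
  exact: (cvgMr_tmp (hinf i j).2).
exact: (cvgB h1 h2).
Qed.

Lemma T_entry k i j : (T k j i)^* = T k i j.
Proof. by have := congr1 (fun M : 'M[C]_n => M i j) (T_herm k); rewrite /adj !mxE. Qed.

Lemma Tinf_herm : adj Tinf = Tinf.
Proof.
apply/matrixP => i j; rewrite /adj !mxE; apply: conj_eq.
- apply: (cvg_uniq (hinf j i).1).
  have -> : (fun k => complex.Re (iter k (Phi tau e) T0 j i)) =
            (fun k => complex.Re (iter k (Phi tau e) T0 i j)).
    by apply: funext => k; rewrite -(T_entry k i j) ReC.
  exact: (hinf i j).1.
- apply: (cvg_uniq (hinf j i).2).
  have -> : (fun k => complex.Im (iter k (Phi tau e) T0 j i)) =
            (fun k => - complex.Im (iter k (Phi tau e) T0 i j)).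
    by apply: funext => k; rewrite -(T_entry k i j) ImC opprK.
  exact: cvgN (hinf i j).2.
Qed.

Lemma Tinf_psd : psd Tinf.
Proof.
split; first exact: Tinf_herm.
move=> x; rewrite lecE; apply/andP; split.
- have hz := herm_sym x x Tinf_herm.
  have h : complex.Im (inner x (Tinf *m x)) = - complex.Im (inner x (Tinf *m x)).
    by rewrite {1}hz ImC.
  apply/eqP; rewrite /=; lra.
- rewrite -(cvg_lim (@Rhausdorff R) (form_cvg (x:=x) (y:=x))) /=.
  apply: limr_ge; first by apply/cvg_ex; eexists; exact: form_cvg.
  by apply: nearW => k; exact: q_ge0.
Qed.

Lemma qe_cvg0 : q e @ \oo --> 0.
Proof.
have -> : q e = (fun k => tau^-1 * \sum_i (q (delta_mx i 0) k - q (delta_mx i 0) k.+1)).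
  by apply: funext => k; rewrite /q (quad_e_id e tau0 (T_psd k)).
have hlim : tau^-1 * \sum_(i < n) (limn (q (delta_mx i 0)) - limn (q (delta_mx i 0))) = 0.
  by rewrite big1 ?mulr0 // => i _; rewrite subrr.
have hs : (fun k => \sum_i (q (delta_mx i 0) k - q (delta_mx i 0) k.+1)) @ \oo -->
   \sum_(i < n) (limn (q (delta_mx i 0)) - limn (q (delta_mx i 0))).
  apply: cvg_sum_fin => i.
  have h1 := q_cvg (x:=delta_mx i 0).
  have h2 : (fun k => q (delta_mx i 0) k.+1) @ \oo --> limn (q (delta_mx i 0)).
    by rewrite (cvg_shiftS (q (delta_mx i 0))).
  exact: (cvgB h1 h2).
have := cvgMl_tmp (a:=tau^-1) hs; rewrite hlim; exact.
Qed.

Lemma Tinf_final : Phi tau e Tinf = Tinf /\ Tinf *m e = 0 /\ ran_in_perp Tinf e.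
Proof.
have hRe : complex.Re (quad Tinf e) = 0 := cvg_uniq (form_cvg (x:=e) (y:=e)) qe_cvg0.
have h0 : 0 <= quad Tinf e by case: Tinf_psd => _; apply.
have hq : quad Tinf e = 0 by apply: C_eq0 => //; exact: ger0_Im.
have hBe := psd_inner_eq0 Tinf_psd hq.
have P := part1 e tau0 Tinf_psd.
split; first exact: (P 0 1).2 hBe.
split; first exact: (P 1 2).1 hBe.
exact: (P 1 3).1 hBe.
Qed.

End Lim.

End Iter.

Unset Implicit Arguments.
Local Open Scope ring_scope.
Local Open Scope complex_scope.

Theorem proposition4p3 (R : realType) (n : nat) (e : 'cV[R[i]]_n) (tau : R) :
  inner e e = 1 -> 0 < tau -> tau < 1 ->
  (* equivalence (1) <-> (2) <-> (3) <-> (4) *)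
  (forall S : 'M[R[i]]_n, psd S ->
     [<-> Phi tau e S = S;
          psd_sqrt S *m e = 0;
          S *m e = 0;
          ran_in_perp S e]) /\
  (* every positive operator supported on e^perp is a fixed point *)
  (forall S : 'M[R[i]]_n, psd S -> ran_in_perp S e -> Phi tau e S = S) /\
  (* iteration: the limit exists, is a fixed point, kills e, ran in e^perp *)
  (forall T0 : 'M[R[i]]_n, psd T0 ->
     (exists Tinf, mx_cvg (fun k => iter k (Phi tau e) T0) Tinf) /\
     (forall Tinf, mx_cvg (fun k => iter k (Phi tau e) T0) Tinf ->
        Phi tau e Tinf = Tinf /\ Tinf *m e = 0 /\ ran_in_perp Tinf e)).
Proof.
move=> he tau0 tau1; split; [|split].
- by move=> S hS; apply: part1.
- move=> S hS hran; have P := part1 e tau0 hS; exact: (P 3 0).1 hran.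
- move=> T0 hT0; split; first exact: (limit_exists he tau0 tau1 hT0).
  by move=> Tinf hinf; exact: (Tinf_final he tau0 tau1 hT0 hinf).
Qed.
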